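(* Let $n\in\mathbb{N}$, $\alpha\in\mathbb{R}$ with $n<\alpha\le n+1$, $k\in\mathbb{N}$, $\mu\in\mathbb{R}$ with $\mu>-1$, and consider the differential operator in the Laplace variable $s$ $$\Pi^{n+1}_{k,\mu,\alpha}=\frac{1}{s^{2\alpha+k+\mu+3}}\cdot\frac{d}{ds}\cdot s^{2\alpha-n+1+k}\cdot\frac{d^{n+k+1}}{ds^{n+k+1}}\cdot s^{n+1}.$$ Then $\Pi^{n+1}_{k,\mu,\alpha}$ is an integral-annihilator for $x^{(\alpha)}(t_0)$ via the truncated fractional Taylor expansion $$x_{2\alpha-n}(t_0+t)=\sum_{j=0}^{n}\frac{t^j}{j!}x^{(j)}(t_0)+\frac{t^{\alpha}}{\Gamma(\alpha+1)}x^{(\alpha)}(t_0)+\frac{t^{2\alpha-n}}{\Gamma(2\alpha-n+1)}x^{(2\alpha-n)}(t_0),\quad t\ge0,$$ that is: (i) writing $\hat x_{2\alpha-n}(s)=\sum_{j=0}^n s^{-(j+1)}x^{(j)}(t_0)+s^{-(\alpha+1)}x^{(\alpha)}(t_0)+s^{-(2\alpha-n+1)}x^{(2\alpha-n)}(t_0)$ for its Laplace transform (in $t$), the terms involving $x^{(j)}(t_0)$, $0\le j\le n$, and $x^{(2\alpha-n)}(t_0)$ are annihilated, and for every $T>0$ $$(-1)^{n+1+k}\,\mathcal{L}^{-1}\{\Pi^{n+1}_{k,\mu,\alpha}\hat x_{2\alpha-n}\}(T)=\frac{\Gamma(\alpha+1+k)}{\Gamma(\alpha-n)}\,\frac{(\alpha-n)\,T^{n+\alpha+3+k+\mu}}{\Gamma(n+\alpha+k+\mu+4)}\,x^{(\alpha)}(t_0);$$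 (ii) after expansion by the Leibniz rule, $\Pi^{n+1}_{k,\mu,\alpha}$ is a finite linear combination of operators $s^{-\nu}\frac{d^m}{ds^m}$ with $\nu\ge\mu+1>0$, so that its action on a Laplace transform corresponds in the time domain to a Riemann–Liouville integral.
   Context: $\mathcal{L}^{-1}$ denotes the inverse Laplace transform. Here $x^{(j)}(t_0)$, $x^{(\alpha)}(t_0)$, $x^{(2\alpha-n)}(t_0)$ are arbitrary real coefficients (in the application, derivative values of a signal $x\in\mathcal{C}^n(I)$ at $t_0$, the fractional ones being Jumarie modified Riemann–Liouville derivatives $x^{(\beta)}=(x^{(n)})^{(\beta-n)}$). The time-domain meaning of $s^{-\nu}\frac{d^m}{ds^m}\hat g(s)$, $\nu>0$, is $T\mapsto\frac{1}{\Gamma(\nu)}\int_0^T(T-\tau)^{\nu-1}(-\tau)^m g(\tau)\,d\tau$. *)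

(* Defs.v *)
From Stdlib Require Import Reals List.
From Coquelicot Require Import Coquelicot.
Open Scope R_scope.

Definition Gamma (x : R) : R :=
  RInt_gen (fun t => Rpower t (x - 1) * exp (- t))
           (at_right 0) (Rbar_locally p_infty).

Definition is_laplace (g : R -> R) (s F : R) : Prop :=
  is_RInt_gen (fun t => exp (- (s * t)) * g t)
              (at_right 0) (Rbar_locally p_infty) F.

Definition Pi_op (n k : nat) (mu alpha : R) (f : R -> R) (s : R) : R :=
  / Rpower s (2 * alpha + INR k + mu + 3) *
  Derive (fun u => Rpower u (2 * alpha - INR n + 1 + INR k) *
                   Derive_n (fun v => v ^ (n + 1) * f v) (n + k + 1) u) s.

(* Laplace transform (in t) of the truncated fractional Taylor expansion
   x_{2alpha-n}(t0+t), with coefficients c j = x^(j)(t0), xa = x^(alpha)(t0),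
   xb = x^(2alpha-n)(t0). *)
Definition xhat (n : nat) (alpha : R) (c : nat -> R) (xa xb : R) (s : R) : R :=
  sum_f_R0 (fun j => Rpower s (- (INR j + 1)) * c j) n
  + Rpower s (- (alpha + 1)) * xa
  + Rpower s (- (2 * alpha - INR n + 1)) * xb.

Definition lin_comb (L : list (R * R * nat)) (f : R -> R) (s : R) : R :=
  fold_right (fun '(c, nu, m) acc => c * Rpower s (- nu) * Derive_n f m s + acc) 0 L.

(* Main.v *)
Require Import Defs.
From Stdlib Require Import Reals List Lra Lia Classical FunctionalExtensionality.
From Coquelicot Require Import Coquelicot.
Open Scope R_scope.

Lemma loc_pos s : 0 < s -> locally s (fun u => 0 < u).
Proof. intros Hs. apply (open_gt 0 s Hs). Qed.

Lemma is_derive_Rpower p u : 0 < u ->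
  is_derive (fun x => Rpower x p) u (p * Rpower u (p - 1)).
Proof. intros Hu. apply is_derive_Reals. now apply derivable_pt_lim_power. Qed.

Lemma Pi_op_ext n k mu alpha f g s : 0 < s -> (forall u, 0 < u -> f u = g u) ->
  Pi_op n k mu alpha f s = Pi_op n k mu alpha g s.
Proof.
  intros Hs Hfg. unfold Pi_op. f_equal. apply Derive_ext_loc.
  apply (filter_imp (fun u => 0 < u)); [|now apply loc_pos].
  intros u Hu. f_equal. apply Derive_n_ext_loc.
  apply (filter_imp (fun u => 0 < u)); [|now apply loc_pos].
  intros v Hv. now rewrite Hfg.
Qed.

Definition psum (l : list (R*R)) (u : R) : R :=
  fold_right (fun t acc => fst t * Rpower u (snd t) + acc) 0 l.
Definition dp (l : list (R*R)) := map (fun t => (fst t * snd t, snd t - 1)) l.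
Definition pshift (a : R) (l : list (R*R)) := map (fun t => (fst t, snd t + a)) l.

Lemma psum_deriv l u : 0 < u -> is_derive (psum l) u (psum (dp l) u).
Proof.
  intros Hu. induction l as [|t l IH]; simpl.
  - apply (is_derive_const 0).
  - apply (is_derive_plus (fun x => fst t * Rpower x (snd t)) (psum l)); [|exact IH].
    replace (fst t * snd t * Rpower u (snd t - 1)) with (fst t * (snd t * Rpower u (snd t - 1))) by ring.
    apply is_derive_scal. now apply is_derive_Rpower.
Qed.

Lemma Derive_n_psum l m u : 0 < u ->
  Derive_n (psum l) m u = psum (Nat.iter m dp l) u.
Proof.
  revert u. induction m as [|m IH]; intros u Hu; [reflexivity|].
  simpl. rewrite (Derive_ext_loc _ (psum (Nat.iter m dp l))).
  - apply is_derive_unique. now apply psum_deriv.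
  - apply (filter_imp (fun u => 0 < u)); [|now apply loc_pos]. intros; now apply IH.
Qed.

Lemma psum_shift a l u : Rpower u a * psum l u = psum (pshift a l) u.
Proof.
  induction l as [|t l IH]; simpl; [ring|].
  rewrite <- IH, Rpower_plus. ring.
Qed.

Lemma psum_app l1 l2 u : psum (l1 ++ l2) u = psum l1 u + psum l2 u.
Proof. induction l1 as [|t l IH]; simpl; [ring|]. rewrite IH; ring. Qed.

Definition EE k mu alpha := 2 * alpha + INR k + mu + 3.
Definition ee n k alpha := 2 * alpha - INR n + 1 + INR k.

Lemma Pi_psum n k mu alpha l s : 0 < s ->
  Pi_op n k mu alpha (psum l) s =
  psum (pshift (- EE k mu alpha) (dp (pshift (ee n k alpha)
     (Nat.iter (n + k + 1) dp (pshift (INR (n+1)) l))))) s.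
Proof.
  intros Hs. unfold Pi_op.
  rewrite (Derive_ext_loc _ (psum (pshift (ee n k alpha)
     (Nat.iter (n + k + 1) dp (pshift (INR (n+1)) l))))).
  - rewrite (is_derive_unique _ _ _ (psum_deriv _ _ Hs)).
    rewrite <- psum_shift, Rpower_Ropp. reflexivity.
  - apply (filter_imp (fun u => 0 < u)); [|now apply loc_pos]. intros u Hu.
    rewrite <- psum_shift. unfold ee. f_equal.
    rewrite (Derive_n_ext_loc _ (psum (pshift (INR (n+1)) l))).
    + now apply Derive_n_psum.
    + apply (filter_imp (fun u => 0 < u)); [|now apply loc_pos]. intros v Hv.
      rewrite <- psum_shift, Rpower_pow; auto.
Qed.

Fixpoint ff (b : R) (m : nat) : R :=
  match m with O => 1 | S m => ff b m * (b - INR m) end.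

Lemma iter_dp m l : Nat.iter m dp l =
  map (fun t => (fst t * ff (snd t) m, snd t - INR m)) l.
Proof.
  induction m as [|m IH]; simpl.
  - rewrite <- (map_id l) at 1. apply map_ext. intros [c p]; simpl. f_equal; ring.
  - rewrite IH. unfold dp. rewrite map_map. apply map_ext. intros [c p]; simpl.
    f_equal; [ring|]. destruct m; simpl; ring.
Qed.

Definition Fin n k mu alpha (t : R*R) : R*R :=
  (fst t * ff (snd t + INR (n+1)) (n+k+1) * (snd t + INR (n+1) - INR (n+k+1) + ee n k alpha),
   snd t + INR (n+1) - INR (n+k+1) + ee n k alpha - 1 + - EE k mu alpha).

Lemma Pi_psum_map n k mu alpha l s : 0 < s ->
  Pi_op n k mu alpha (psum l) s = psum (map (Fin n k mu alpha) l) s.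
Proof.
  intros Hs. rewrite Pi_psum by auto. f_equal.
  rewrite iter_dp. unfold pshift, dp. rewrite !map_map. apply map_ext.
  intros [c p]; unfold Fin; simpl. f_equal; ring.
Qed.

Lemma ff_zero i m : (i < m)%nat -> ff (INR i) m = 0.
Proof.
  induction m as [|m IH]; intros H; [lia|]. simpl.
  destruct (Nat.eq_dec i m) as [->|Hne]; [ring|]. rewrite IH by lia. ring.
Qed.

Fixpoint pr (y : R) (m : nat) : R :=
  match m with O => 1 | S m => pr y m * (y + INR m) end.

Lemma ff_pr y m : ff (- y) m = (-1) ^ m * pr y m.
Proof. induction m as [|m IH]; simpl; [ring|]. rewrite IH; ring. Qed.

Lemma psum_one b u : psum ((1, b) :: nil) u = Rpower u b.
Proof. simpl. ring. Qed.

Lemma part_i_a n k mu alpha : forall j : nat, (j <= n)%nat -> forall s : R, 0 < s ->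
     Pi_op n k mu alpha (fun u => Rpower u (- (INR j + 1))) s = 0.
Proof.
  intros j Hj s Hs.
  rewrite (Pi_op_ext _ _ _ _ _ (psum ((1, - (INR j + 1)) :: nil)) _ Hs)
    by (intros; now rewrite psum_one).
  rewrite Pi_psum_map by auto. simpl. unfold Fin; simpl.
  replace (- (INR j + 1) + INR (n + 1)) with (INR (n - j))
    by (rewrite minus_INR, plus_INR by auto; simpl; ring).
  rewrite ff_zero by lia. ring.
Qed.

Lemma part_i_b n k mu alpha : forall s : R, 0 < s ->
     Pi_op n k mu alpha (fun u => Rpower u (- (2 * alpha - INR n + 1))) s = 0.
Proof.
  intros s Hs.
  rewrite (Pi_op_ext _ _ _ _ _ (psum ((1, - (2 * alpha - INR n + 1)) :: nil)) _ Hs)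
    by (intros; now rewrite psum_one).
  rewrite Pi_psum_map by auto. simpl. unfold Fin, ee; simpl.
  rewrite !plus_INR. simpl. ring.
Qed.

Definition jl n (c : nat -> R) := map (fun j => (c j, - (INR j + 1))) (seq 0 (S n)).

Lemma sum_jl n c u : sum_f_R0 (fun j => Rpower u (- (INR j + 1)) * c j) n = psum (jl n c) u.
Proof.
  induction n as [|n IH].
  - simpl. ring.
  - simpl sum_f_R0. rewrite IH. unfold jl. rewrite (seq_S (S n)), map_app, psum_app.
    simpl. ring.
Qed.

Lemma psum_zero l u : (forall t, In t l -> fst t = 0) -> psum l u = 0.
Proof.
  induction l as [|t l IH]; intros H; simpl; [ring|].
  rewrite H by (left; auto). rewrite IH by (intros; apply H; right; auto). ring.
Qed.

Lemma Pi_xhat n k mu alpha c xa xb s : 0 < s ->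
  Pi_op n k mu alpha (xhat n alpha c xa xb) s =
  xa * ff (INR n - alpha) (n+k+1) * (alpha - INR n) *
    Rpower s (- (INR n + alpha + INR k + mu + 4)).
Proof.
  intros Hs.
  rewrite (Pi_op_ext _ _ _ _ _ (psum (jl n c ++ (xa, - (alpha + 1)) ::
      (xb, - (2 * alpha - INR n + 1)) :: nil)) _ Hs).
  2:{ intros u Hu. unfold xhat. rewrite psum_app, <- sum_jl. simpl. ring. }
  rewrite Pi_psum_map, map_app, psum_app by auto.
  rewrite psum_zero.
  2:{ intros t Ht. apply in_map_iff in Ht. destruct Ht as [t' [<- Ht']].
      unfold jl in Ht'. apply in_map_iff in Ht'. destruct Ht' as [j [<- Hj]].
      apply in_seq in Hj. unfold Fin; simpl.
      replace (- (INR j + 1) + INR (n + 1)) with (INR (n - j))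
        by (rewrite minus_INR, plus_INR by lia; simpl; ring).
      rewrite ff_zero by lia. ring. }
  simpl. unfold Fin, ee, EE; simpl. rewrite !plus_INR. simpl.
  replace (- (alpha + 1) + (INR n + 1)) with (INR n - alpha) by ring.
  replace (INR n - alpha - (INR n + INR k + 1) + (2 * alpha - INR n + 1 + INR k)) with (alpha - INR n) by ring.
  replace (alpha - INR n - 1 + - (2 * alpha + INR k + mu + 3)) with (- (INR n + alpha + INR k + mu + 4)) by ring.
  ring.
Qed.

Definition tsum (f : R -> R) (L : list (R*R*nat)) (u : R) : R :=
  fold_right (fun t acc => fst (fst t) * Rpower u (snd (fst t)) * Derive_n f (snd t) u + acc) 0 L.
Definition dl (L : list (R*R*nat)) : list (R*R*nat) :=
  flat_map (fun t => (fst (fst t) * snd (fst t), snd (fst t) - 1, snd t)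
                     :: (fst (fst t), snd (fst t), S (snd t)) :: nil) L.
Definition tshift (a : R) (L : list (R*R*nat)) :=
  map (fun t => (fst (fst t), snd (fst t) + a, snd t)) L.

Lemma tsum_deriv f L u : (forall m v, 0 < v -> ex_derive_n f m v) -> 0 < u ->
  is_derive (tsum f L) u (tsum f (dl L) u).
Proof.
  intros Hf Hu. induction L as [|t L IH]; simpl.
  - apply (is_derive_const 0).
  - replace (fst (fst t) * snd (fst t) * Rpower u (snd (fst t) - 1) * Derive_n f (snd t) u +
      (fst (fst t) * Rpower u (snd (fst t)) * Derive (Derive_n f (snd t)) u + tsum f (dl L) u))
     with ((fst (fst t) * (snd (fst t) * Rpower u (snd (fst t) - 1) * Derive_n f (snd t) u +
            Rpower u (snd (fst t)) * Derive (Derive_n f (snd t)) u)) + tsum f (dl L) u) by ring.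
    apply (is_derive_plus (fun x => fst (fst t) * Rpower x (snd (fst t)) * Derive_n f (snd t) x) (tsum f L)); [|exact IH].
    eapply is_derive_ext. { intros x. symmetry. apply Rmult_assoc. }
    apply is_derive_scal.
    apply (is_derive_mult (fun x => Rpower x (snd (fst t))) (Derive_n f (snd t))).
    + now apply is_derive_Rpower.
    + apply Derive_correct. apply (Hf (S (snd t)) u Hu).
    + intros; apply Rmult_comm.
Qed.

Lemma Derive_n_tsum f L m u : (forall m v, 0 < v -> ex_derive_n f m v) -> 0 < u ->
  Derive_n (tsum f L) m u = tsum f (Nat.iter m dl L) u.
Proof.
  intros Hf. revert u. induction m as [|m IH]; intros u Hu; [reflexivity|].
  simpl. rewrite (Derive_ext_loc _ (tsum f (Nat.iter m dl L))).
  - apply is_derive_unique. now apply tsum_deriv.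
  - apply (filter_imp (fun u => 0 < u)); [|now apply loc_pos]. intros; now apply IH.
Qed.

Lemma tsum_shift f a L u : Rpower u a * tsum f L u = tsum f (tshift a L) u.
Proof.
  induction L as [|t L IH]; simpl; [ring|].
  rewrite <- IH, Rpower_plus. ring.
Qed.

Definition Lfin n k mu alpha :=
  tshift (- EE k mu alpha) (dl (tshift (ee n k alpha)
     (Nat.iter (n + k + 1) dl ((1, INR (n+1), O) :: nil)))).

Lemma Pi_tsum n k mu alpha f s : (forall m v, 0 < v -> ex_derive_n f m v) -> 0 < s ->
  Pi_op n k mu alpha f s = tsum f (Lfin n k mu alpha) s.
Proof.
  intros Hf Hs. unfold Pi_op, Lfin.
  rewrite (Derive_ext_loc _ (tsum f (tshift (ee n k alpha)
     (Nat.iter (n + k + 1) dl ((1, INR (n+1), O) :: nil))))).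
  - rewrite (is_derive_unique _ _ _ (tsum_deriv _ _ _ Hf Hs)).
    rewrite <- tsum_shift, Rpower_Ropp. reflexivity.
  - apply (filter_imp (fun u => 0 < u)); [|now apply loc_pos]. intros u Hu.
    rewrite <- tsum_shift. unfold ee. f_equal.
    rewrite (Derive_n_ext_loc _ (tsum f ((1, INR (n+1), O) :: nil))).
    + now apply Derive_n_tsum.
    + apply (filter_imp (fun u => 0 < u)); [|now apply loc_pos]. intros v Hv.
      simpl. rewrite Rpower_pow; auto. ring.
Qed.

Definition Inv (P : R) (j : nat) (L : list (R*R*nat)) :=
  forall t, In t L -> snd (fst t) = P + INR (snd t) /\ (snd t <= j)%nat.

Lemma Inv_dl P j L : Inv P j L -> Inv (P - 1) (S j) (dl L).
Proof.
  intros H t Ht. unfold dl in Ht. apply in_flat_map in Ht.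
  destruct Ht as [t0 [H0 Ht]]. destruct (H t0 H0) as [E1 E2].
  simpl in Ht. destruct Ht as [<-|[<-|[]]]; cbn [fst snd]; split; try lia.
  - rewrite E1. ring.
  - rewrite E1, S_INR. ring.
Qed.

Lemma Inv_iter P j L m : Inv P j L -> Inv (P - INR m) (j + m) (Nat.iter m dl L).
Proof.
  induction m as [|m IH]; intros H; cbn [Nat.iter].
  - replace (P - INR 0) with P by (simpl; ring). now rewrite Nat.add_0_r.
  - replace (P - INR (S m)) with (P - INR m - 1) by (rewrite S_INR; ring).
    rewrite Nat.add_succ_r. now apply Inv_dl, IH.
Qed.

Lemma Inv_shift P j L a : Inv P j L -> Inv (P + a) j (tshift a L).
Proof.
  intros H t Ht. unfold tshift in Ht. apply in_map_iff in Ht.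
  destruct Ht as [t0 [<- H0]]. destruct (H t0 H0) as [E1 E2]. simpl.
  split; auto. rewrite E1; ring.
Qed.

Lemma lin_comb_tsum f L s :
  lin_comb (map (fun t => (fst (fst t), - snd (fst t), snd t)) L) f s = tsum f L s.
Proof.
  induction L as [|[[c p] m] L IH]; simpl; [reflexivity|].
  rewrite IH, Ropp_involutive. reflexivity.
Qed.

Lemma part_ii n k mu alpha (Hmu : -1 < mu) :
  exists L : list (R * R * nat),
     (forall c nu m, In (c, nu, m) L -> mu + 1 <= nu /\ 0 < nu) /\
     (forall f : R -> R,
        (forall (m : nat) (u : R), 0 < u -> ex_derive_n f m u) ->
        forall s : R, 0 < s -> Pi_op n k mu alpha f s = lin_comb L f s).
Proof.
  exists (map (fun t => (fst (fst t), - snd (fst t), snd t)) (Lfin n k mu alpha)). split.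
  - intros c nu m Hin. apply in_map_iff in Hin. destruct Hin as [t [Et Ht]].
    assert (HI : Inv (INR (n+1) - INR (n+k+1) + ee n k alpha - 1 + - EE k mu alpha)
                   (S (0 + (n+k+1))) (Lfin n k mu alpha)).
    { unfold Lfin. apply Inv_shift, Inv_dl, Inv_shift, Inv_iter.
      intros t0 [<-|[]]; simpl; split; auto; ring. }
    destruct (HI t Ht) as [E1 E2]. injection Et; intros <- <- <-.
    assert (E3 : INR (snd t) <= INR n + INR k + 2).
    { apply le_INR in E2. replace (S (0 + (n+k+1))) with (n+k+2)%nat in E2 by lia.
      rewrite !plus_INR in E2. simpl in E2. lra. }
    rewrite E1. unfold ee, EE. rewrite !plus_INR. simpl. lra.
  - intros f Hf s Hs. rewrite lin_comb_tsum. now apply Pi_tsum.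
Qed.

Lemma ballR x e y : ball x e y <-> Rabs (y - x) < e.
Proof. split; intros H; exact H. Qed.

Lemma Rpower_pos t c : 0 < Rpower t c.
Proof. unfold Rpower. apply exp_pos. Qed.

Lemma Rpower_1b c : Rpower 1 c = 1.
Proof. unfold Rpower. rewrite ln_1, Rmult_0_r. apply exp_0. Qed.

Lemma mono_lim_pinf (F : R -> R) a B :
  (forall x y, a <= x <= y -> F x <= F y) -> (forall x, a <= x -> F x <= B) ->
  exists l, filterlim F (Rbar_locally p_infty) (locally l) /\ (forall x, a <= x -> F x <= l).
Proof.
  intros Hm Hb.
  set (E := fun y => exists x, a <= x /\ y = F x).
  destruct (completeness E) as [l [Hub Hlub]].
  - exists B. intros y [x [Hx ->]]. now apply Hb.
  - exists (F a). exists a. split; [lra|auto].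
  - exists l. assert (Hle : forall x, a <= x -> F x <= l) by (intros x Hx; apply Hub; exists x; auto).
    split; auto. apply filterlim_locally. intros eps.
    assert (Hex : exists x0, a <= x0 /\ l - eps < F x0).
    { apply NNPP. intros Hn. assert (l <= l - eps); [|destruct eps; simpl in *; lra].
      apply Hlub. intros y [x [Hx ->]]. apply Rnot_lt_le. intros Hlt. apply Hn. exists x; auto. }
    destruct Hex as [x0 [Hx0 Hl]]. exists x0. intros x Hx. apply ballR.
    assert (F x0 <= F x) by (apply Hm; lra). assert (F x <= l) by (apply Hle; lra).
    apply Rabs_def1; lra.
Qed.

Lemma mono_lim_0 (F : R -> R) B :
  (forall x y, 0 < x <= y -> y <= 1 -> F x <= F y) -> (forall x, 0 < x <= 1 -> B <= F x) ->
  exists l, filterlim F (at_right 0) (locally l) /\ (forall x, 0 < x <= 1 -> l <= F x).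
Proof.
  intros Hm Hb.
  set (E := fun y => exists x, 0 < x <= 1 /\ y = - F x).
  destruct (completeness E) as [m [Hub Hlub]].
  - exists (- B). intros y [x [Hx ->]]. apply Ropp_le_contravar. now apply Hb.
  - exists (- F 1). exists 1. split; [lra|auto].
  - exists (- m). assert (Hle : forall x, 0 < x <= 1 -> - m <= F x).
    { intros x Hx. assert (- F x <= m) by (apply Hub; exists x; auto). lra. }
    split; auto. apply filterlim_locally. intros eps.
    assert (Hex : exists x0, 0 < x0 <= 1 /\ m - eps < - F x0).
    { apply NNPP. intros Hn. assert (m <= m - eps); [|destruct eps; simpl in *; lra].
      apply Hlub. intros y [x [Hx ->]]. apply Rnot_lt_le. intros Hlt. apply Hn. exists x; auto. }
    destruct Hex as [x0 [Hx0 Hl]].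
    assert (Hx0p : 0 < x0) by lra.
    exists (mkposreal x0 Hx0p). intros x Hx Hxp.
    assert (Hx' : Rabs (x - 0) < x0) by exact Hx.
    rewrite Rminus_0_r, Rabs_right in Hx' by lra.
    apply ballR.
    assert (F x <= F x0) by (apply Hm; lra). assert (- m <= F x) by (apply Hle; lra).
    apply Rabs_def1; lra.
Qed.

Lemma is_derive_Rpower' p u : 0 < u ->
  is_derive (fun x => Rpower x p) u (p * Rpower u (p - 1)).
Proof. intros Hu. apply is_derive_Reals. now apply derivable_pt_lim_power. Qed.

Definition g (x t : R) := Rpower t (x - 1) * exp (- t).

Lemma g_ex_derive x t : 0 < t -> ex_derive (g x) t.
Proof.
  intros Ht. unfold g. apply ex_derive_mult.
  - eexists. now apply is_derive_Rpower'.
  - auto_derive. auto.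
Qed.

Lemma g_cont x t : 0 < t -> continuous (g x) t.
Proof. intros; apply (ex_derive_continuous (K:=R_AbsRing) (V:=R_NormedModule)). now apply g_ex_derive. Qed.

Lemma g_pos x t : 0 < g x t.
Proof. unfold g. apply Rmult_lt_0_compat; [apply Rpower_pos|apply exp_pos]. Qed.

Lemma g_ex_RInt x a b : 0 < a -> 0 < b -> ex_RInt (g x) a b.
Proof.
  intros Ha Hb. apply (ex_RInt_continuous (V:=R_CompleteNormedModule)). intros z Hz. apply g_cont.
  assert (0 < Rmin a b) by (apply Rmin_glb_lt; auto). lra.
Qed.

Definition G x u := RInt (g x) 1 u.

Lemma G_derive x u : 0 < u -> is_derive (G x) u (g x u).
Proof.
  intros Hu. apply (is_derive_RInt (V:=R_CompleteNormedModule) _ _ 1); [|now apply g_cont].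
  apply (filter_imp (fun u => 0 < u)); [|apply (open_gt 0 u Hu)].
  intros b Hb. apply (RInt_correct (V:=R_CompleteNormedModule)), g_ex_RInt; lra.
Qed.

Lemma G_mono x a b : 0 < a <= b -> G x a <= G x b.
Proof.
  intros Hab. unfold G. rewrite <- (RInt_Chasles (V:=R_CompleteNormedModule) (g x) 1 a b) by (apply g_ex_RInt; lra).
  assert (0 <= RInt (g x) a b).
  { apply RInt_ge_0; [lra|apply g_ex_RInt; lra|]. intros; left; apply g_pos. }
  simpl. unfold plus; simpl. lra.
Qed.

Lemma exp_le x y : x <= y -> exp x <= exp y.
Proof. intros [H|H]; [left; now apply exp_increasing|right; now subst]. Qed.

Lemma exp_bound c : exists M, 0 < M /\ forall t, 1 <= t ->
  Rpower t c * exp (- t) <= M * exp (- t / 2).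
Proof.
  set (d := Rabs c + 1).
  assert (Hd : 0 < d) by (unfold d; pose proof (Rabs_pos c); lra).
  assert (Hcd : c < d) by (unfold d; pose proof (Rle_abs c); lra).
  exists (exp (d * ln (2 * d) - d)). split; [apply exp_pos|].
  intros t Ht. unfold Rpower. rewrite <- !exp_plus. apply exp_le.
  assert (Hl : 0 <= ln t) by (rewrite <- ln_1; apply ln_le; lra).
  assert (H1 : 1 + ln (t / (2 * d)) <= t / (2 * d)).
  { rewrite <- (exp_ln (t / (2*d))) at 2 by (apply Rdiv_lt_0_compat; lra). apply exp_ineq1_le. }
  rewrite ln_div in H1 by lra.
  assert (H2 : d * (1 + (ln t - ln (2 * d))) <= d * (t / (2 * d))) by (apply Rmult_le_compat_l; lra).
  replace (d * (t / (2 * d))) with (t / 2) in H2 by (field; lra).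
  assert (H3 : c * ln t <= d * ln t) by (apply Rmult_le_compat_r; lra).
  lra.
Qed.

Lemma cont_Rpower p t : 0 < t -> continuous (fun y => Rpower y p) t.
Proof.
  intros Ht. apply (ex_derive_continuous (K:=R_AbsRing) (V:=R_NormedModule)).
  eexists. now apply is_derive_Rpower'.
Qed.

Lemma G_upper x : exists B, forall u, 1 <= u -> G x u <= B.
Proof.
  destruct (exp_bound (x - 1)) as [M [HM HMb]].
  exists (2 * M * exp (- 1 / 2)). intros u Hu.
  assert (HI : is_RInt (fun t => M * exp (- t / 2)) 1 u
     (minus (-2 * M * exp (- u / 2)) (-2 * M * exp (- 1 / 2)))).
  { apply (is_RInt_derive (V:=R_CompleteNormedModule) (fun t => -2 * M * exp (- t / 2))).
    - intros t _. auto_derive; auto. unfold Rdiv; field.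
    - intros t _. apply (ex_derive_continuous (K:=R_AbsRing) (V:=R_NormedModule)).
      auto_derive. auto. }
  unfold G. apply Rle_trans with (RInt (fun t => M * exp (- t / 2)) 1 u).
  - apply RInt_le; auto.
    + apply g_ex_RInt; lra.
    + eexists; exact HI.
    + intros t Ht. apply HMb. lra.
  - rewrite (is_RInt_unique _ _ _ _ HI). unfold minus, plus, opp; simpl.
    pose proof (exp_pos (- u / 2)). nra.
Qed.

Lemma G_lower x : 0 < x -> forall u, 0 < u <= 1 -> - / x <= G x u.
Proof.
  intros Hx u Hu.
  assert (HI : is_RInt (fun t => Rpower t (x - 1)) u 1
     (minus (/ x * Rpower 1 x) (/ x * Rpower u x))).
  { apply (is_RInt_derive (V:=R_CompleteNormedModule) (fun t => / x * Rpower t x)).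
    - intros t Ht. assert (0 < t) by (pose proof (Rmin_l u 1); pose proof (Rmin_r u 1);
        assert (0 < Rmin u 1) by (apply Rmin_glb_lt; lra); lra).
      replace (Rpower t (x - 1)) with (/ x * (x * Rpower t (x - 1))) by (field; lra).
      apply is_derive_scal. now apply is_derive_Rpower'.
    - intros t Ht. apply cont_Rpower.
      assert (0 < Rmin u 1) by (apply Rmin_glb_lt; lra). lra. }
  unfold G. rewrite <- (opp_RInt_swap (V:=R_CompleteNormedModule)) by (apply g_ex_RInt; lra).
  assert (RInt (g x) u 1 <= RInt (fun t => Rpower t (x - 1)) u 1).
  { apply RInt_le; [lra|apply g_ex_RInt; lra|eexists; exact HI|].
    intros t Ht. unfold g. rewrite <- (Rmult_1_r (Rpower t (x-1))) at 2.
    apply Rmult_le_compat_l; [left; apply Rpower_pos|].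
    rewrite <- exp_0. apply exp_le. lra. }
  rewrite (is_RInt_unique _ _ _ _ HI) in H. unfold minus, plus, opp in *; simpl in *.
  rewrite Rpower_1b in H. pose proof (Rpower_pos u x).
  assert (0 < / x) by (apply Rinv_0_lt_compat; lra). nra.
Qed.

Lemma prod_pos : filter_prod (at_right 0) (Rbar_locally p_infty)
  (fun ab : R * R => forall x, Rmin (fst ab) (snd ab) <= x <= Rmax (fst ab) (snd ab) -> 0 < x).
Proof.
  apply (Filter_prod _ _ _ (fun a => 0 < a) (fun b => 0 < b)).
  - unfold at_right, within. apply filter_forall. auto.
  - exists 0. auto.
  - intros a b Ha Hb t Ht. simpl in Ht.
    assert (0 < Rmin a b) by (apply Rmin_glb_lt; auto). lra.
Qed.

Lemma RInt_gen_from (F h : R -> R) la lb :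
  (forall t, 0 < t -> is_derive F t (h t)) -> (forall t, 0 < t -> continuous h t) ->
  filterlim F (at_right 0) (locally la) -> filterlim F (Rbar_locally p_infty) (locally lb) ->
  is_RInt_gen h (at_right 0) (Rbar_locally p_infty) (lb - la).
Proof.
  intros HD Hc H0 Hinf.
  apply (is_RInt_gen_ext (Derive F)).
  - eapply filter_imp; [|exact prod_pos]. intros [a b] Hab t Ht. simpl in *.
    apply is_derive_unique, HD, Hab. lra.
  - apply is_RInt_gen_Derive; auto.
    + eapply filter_imp; [|exact prod_pos]. intros [a b] Hab t Ht.
      eexists. apply HD. apply (Hab t Ht).
    + eapply filter_imp; [|exact prod_pos]. intros [a b] Hab t Ht.
      apply (continuous_ext_loc _ h).
      * apply (filter_imp (fun u => 0 < u)); [|apply (open_gt 0 t (Hab t Ht))].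
        intros y Hy. symmetry. apply is_derive_unique, HD, Hy.
      * apply Hc, (Hab t Ht).
Qed.

Lemma G_lims x : 0 < x -> exists L0 Linf,
  filterlim (G x) (at_right 0) (locally L0) /\
  filterlim (G x) (Rbar_locally p_infty) (locally Linf) /\ L0 <= 0 /\ 0 < Linf.
Proof.
  intros Hx.
  destruct (G_upper x) as [B HB].
  destruct (mono_lim_pinf (G x) 1 B) as [Linf [HLi HLi2]]; auto.
  { intros a b Hab. apply G_mono; lra. }
  destruct (mono_lim_0 (G x) (- / x)) as [L0 [HL0 HL02]]; auto.
  { intros a b Hab _. apply G_mono; lra. }
  { intros; now apply G_lower. }
  exists L0, Linf. repeat split; auto.
  - assert (G x 1 = 0) by (unfold G; now rewrite RInt_point).
    specialize (HL02 1). lra.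
  - assert (0 < G x 2).
    { unfold G. apply Rle_lt_trans with (RInt (fun _ => 0) 1 2).
      - rewrite RInt_const. unfold scal; simpl. unfold mult; simpl. lra.
      - apply RInt_lt; [lra| |intros; apply continuous_const|intros; apply g_pos].
        intros; apply g_cont; lra. }
    specialize (HLi2 2). lra.
Qed.

Lemma Gamma_spec x : 0 < x ->
  is_RInt_gen (g x) (at_right 0) (Rbar_locally p_infty) (Gamma x) /\ 0 < Gamma x.
Proof.
  intros Hx. destruct (G_lims x Hx) as [L0 [Li [H0 [Hi [HL0 HLi]]]]].
  assert (HI : is_RInt_gen (g x) (at_right 0) (Rbar_locally p_infty) (Li - L0)).
  { apply (RInt_gen_from (G x)); auto.
    - intros; now apply G_derive.
    - intros; now apply g_cont. }
  assert (HG : Gamma x = Li - L0).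
  { unfold Gamma. apply (is_RInt_gen_unique (V:=R_CompleteNormedModule)). exact HI. }
  rewrite HG. split; [exact HI|lra].
Qed.

Lemma lim0_pe x : 0 < x -> filterlim (fun t => Rpower t x * exp (- t)) (at_right 0) (locally 0).
Proof.
  intros Hx. apply filterlim_locally. intros eps.
  assert (Hd : 0 < Rpower eps (/ x)) by apply Rpower_pos.
  exists (mkposreal _ Hd). intros t Ht Htp.
  assert (Ht' : Rabs (t - 0) < Rpower eps (/ x)) by exact Ht.
  rewrite Rminus_0_r, Rabs_right in Ht' by lra.
  apply ballR. rewrite Rminus_0_r.
  assert (H1 : Rpower t x < eps).
  { replace (pos eps) with (Rpower (Rpower eps (/ x)) x).
    - unfold Rpower at 1 3. apply exp_increasing. apply Rmult_lt_compat_l; auto.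
      apply ln_increasing; auto.
    - rewrite Rpower_mult, Rinv_l by lra. apply Rpower_1. destruct eps; auto. }
  assert (H2 : exp (- t) <= 1) by (rewrite <- exp_0; apply exp_le; lra).
  pose proof (Rpower_pos t x). pose proof (exp_pos (- t)).
  rewrite Rabs_right by nra. nra.
Qed.

Lemma liminf_pe x : filterlim (fun t => Rpower t x * exp (- t)) (Rbar_locally p_infty) (locally 0).
Proof.
  destruct (exp_bound x) as [M [HM HMb]].
  apply filterlim_locally. intros eps.
  assert (He : 0 < eps / M) by (apply Rdiv_lt_0_compat; [destruct eps|]; auto).
  exists (Rmax 1 (- 2 * ln (eps / M))). intros t Ht.
  pose proof (Rmax_l 1 (- 2 * ln (eps / M))). pose proof (Rmax_r 1 (- 2 * ln (eps / M))).
  apply ballR. rewrite Rminus_0_r.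
  assert (H1 : Rpower t x * exp (- t) <= M * exp (- t / 2)) by (apply HMb; lra).
  assert (H2 : exp (- t / 2) < eps / M).
  { rewrite <- (exp_ln (eps / M)) by auto. apply exp_increasing. lra. }
  pose proof (Rpower_pos t x). pose proof (exp_pos (- t)).
  rewrite Rabs_right by nra.
  assert (M * exp (- t / 2) < M * (eps / M)) by (apply Rmult_lt_compat_l; auto).
  replace (M * (eps / M)) with (pos eps) in * by (field; lra). lra.
Qed.

Lemma Gamma_succ x : 0 < x -> Gamma (x + 1) = x * Gamma x.
Proof.
  intros Hx. destruct (Gamma_spec x Hx) as [HG _].
  assert (HD : is_RInt_gen (fun t => x * g x t - g (x + 1) t) (at_right 0) (Rbar_locally p_infty) (0 - 0)).
  { apply (RInt_gen_from (fun t => Rpower t x * exp (- t))).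
    - intros t Ht. unfold g. replace (x + 1 - 1) with x by ring.
      replace (x * (Rpower t (x - 1) * exp (- t)) - Rpower t x * exp (- t)) with
        (x * Rpower t (x - 1) * exp (- t) + Rpower t x * (- exp (- t))) by ring.
      apply (is_derive_mult (fun t => Rpower t x) (fun t => exp (- t))).
      + now apply is_derive_Rpower'.
      + auto_derive; auto. ring.
      + intros; apply Rmult_comm.
    - intros t Ht.
      apply (continuous_ext (fun t => minus (scal x (g x t)) (g (x + 1) t))).
      { intros y. unfold minus, plus, opp, scal; simpl. unfold mult; simpl. ring. }
      apply (continuous_minus (K:=R_AbsRing) (V:=R_NormedModule)); [apply (continuous_scal_r (K:=R_AbsRing) (V:=R_NormedModule))|]; now apply g_cont.
    - now apply lim0_pe.
    - apply liminf_pe. }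
  assert (H2 := is_RInt_gen_minus _ _ _ _ (is_RInt_gen_scal _ x _ HG) HD).
  unfold Gamma at 1. apply (is_RInt_gen_unique (V:=R_CompleteNormedModule)).
  replace (x * Gamma x) with (minus (scal x (Gamma x)) (0 - 0))
    by (unfold minus, plus, opp, scal; simpl; unfold mult; simpl; ring).
  eapply is_RInt_gen_ext; [|exact H2].
  apply (Filter_prod _ _ _ (fun _ => True) (fun _ => True)); try (apply filter_true).
  intros a b _ _ t _. unfold minus, plus, opp, scal, g; simpl. unfold mult; simpl. ring.
Qed.

Lemma Gamma_lims x : 0 < x -> exists L0 Li,
  filterlim (G x) (at_right 0) (locally L0) /\
  filterlim (G x) (Rbar_locally p_infty) (locally Li) /\ Gamma x = Li - L0.
Proof.
  intros Hx. destruct (G_lims x Hx) as [L0 [Li [H0 [Hi [HL0 HLi]]]]].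
  exists L0, Li. repeat split; auto.
  unfold Gamma. apply (is_RInt_gen_unique (V:=R_CompleteNormedModule)).
  apply (RInt_gen_from (G x)); auto.
  - intros; now apply G_derive.
  - intros; now apply g_cont.
Qed.

Lemma lin_right s : 0 < s -> filterlim (fun T => s * T) (at_right 0) (at_right 0).
Proof.
  intros Hs P [eps HP]. assert (He : 0 < eps / s) by (apply Rdiv_lt_0_compat; [destruct eps|]; auto).
  exists (mkposreal _ He). intros y Hy Hyp.
  assert (Hy' : Rabs (y - 0) < eps / s) by exact Hy.
  rewrite Rminus_0_r, Rabs_right in Hy' by lra.
  apply HP; [|nra]. apply ballR. rewrite Rminus_0_r, Rabs_right by nra.
  apply Rmult_lt_compat_l with (r := s) in Hy'; auto.
  replace (s * (eps / s)) with (pos eps) in Hy' by (field; lra). lra.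
Qed.

Lemma lin_inf s : 0 < s -> filterlim (fun T => s * T) (Rbar_locally p_infty) (Rbar_locally p_infty).
Proof.
  intros Hs P [M HM]. exists (M / s). intros y Hy. apply HM.
  apply Rmult_lt_compat_l with (r := s) in Hy; auto.
  replace (s * (M / s)) with M in Hy by (field; lra). lra.
Qed.

Lemma laplace_pow x s : 0 < x -> 0 < s ->
  is_RInt_gen (fun t => Rpower t (x - 1) * exp (- (s * t))) (at_right 0) (Rbar_locally p_infty)
    (Gamma x * Rpower s (- x)).
Proof.
  intros Hx Hs. destruct (Gamma_lims x Hx) as [L0 [Li [H0 [Hi HG]]]].
  replace (Gamma x * Rpower s (- x)) with (Rpower s (- x) * Li - Rpower s (- x) * L0) by (rewrite HG; ring).
  apply (RInt_gen_from (fun T => Rpower s (- x) * G x (s * T))).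
  - intros t Ht.
    replace (Rpower t (x - 1) * exp (- (s * t))) with (Rpower s (- x) * (s * g x (s * t))).
    + apply is_derive_scal.
      apply (is_derive_comp (G x) (fun T => s * T) t (g x (s * t)) s).
      * apply G_derive. nra.
      * auto_derive; auto. ring.
    + unfold g. rewrite <- Rpower_mult_distr by auto.
      rewrite <- (Rpower_1 s) at 2 by auto.
      replace (Rpower s (- x) * (Rpower s 1 * (Rpower s (x - 1) * Rpower t (x - 1) * exp (- (s * t)))))
        with ((Rpower s (- x) * Rpower s 1 * Rpower s (x - 1)) * (Rpower t (x - 1) * exp (- (s * t)))) by ring.
      rewrite <- !Rpower_plus. replace (- x + 1 + (x - 1)) with 0 by ring.
      rewrite Rpower_O by auto. ring.
  - intros t Ht. apply (ex_derive_continuous (K:=R_AbsRing) (V:=R_NormedModule)).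
    apply ex_derive_mult.
    + eexists. now apply is_derive_Rpower'.
    + auto_derive. auto.
  - eapply filterlim_comp; [|apply (filterlim_scal_r (K:=R_AbsRing) (V:=R_NormedModule) (Rpower s (- x)) L0)].
    eapply filterlim_comp; [apply lin_right; auto|exact H0].
  - eapply filterlim_comp; [|apply (filterlim_scal_r (K:=R_AbsRing) (V:=R_NormedModule) (Rpower s (- x)) Li)].
    eapply filterlim_comp; [apply lin_inf; auto|exact Hi].
Qed.

Lemma Gamma_pr y m : 0 < y -> Gamma (y + INR m) = Gamma y * pr y m.
Proof.
  intros Hy. induction m as [|m IH].
  - simpl. rewrite Rplus_0_r. ring.
  - rewrite S_INR. replace (y + (INR m + 1)) with ((y + INR m) + 1) by ring.
    rewrite Gamma_succ by (pose proof (pos_INR m); lra). rewrite IH. simpl. ring.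
Qed.

Lemma part_iii n alpha k mu (Halpha : INR n < alpha <= INR n + 1) (Hmu : -1 < mu) :
  forall (c : nat -> R) (xa xb : R) (s : R), 0 < s ->
     is_laplace
       (fun T => Gamma (alpha + 1 + INR k) / Gamma (alpha - INR n) *
                 ((alpha - INR n) * Rpower T (INR n + alpha + 3 + INR k + mu)
                  / Gamma (INR n + alpha + INR k + mu + 4)) * xa)
       s
       ((-1) ^ (n + 1 + k) * Pi_op n k mu alpha (xhat n alpha c xa xb) s).
Proof.
  intros c xa xb s Hs. rewrite Pi_xhat by auto.
  set (x := INR n + alpha + INR k + mu + 4).
  set (y := alpha - INR n).
  assert (Hx : 0 < x) by (unfold x; pose proof (pos_INR n); pose proof (pos_INR k); lra).
  assert (Hy : 0 < y) by (unfold y; lra).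
  replace (INR n - alpha) with (- y) by (unfold y; ring).
  rewrite ff_pr.
  assert (HGa : Gamma (alpha + 1 + INR k) = Gamma y * pr y (n + k + 1)).
  { rewrite <- Gamma_pr by auto. f_equal. unfold y. rewrite !plus_INR. simpl. ring. }
  destruct (Gamma_spec y Hy) as [_ HGy]. destruct (Gamma_spec x Hx) as [_ HGx].
  set (C := Gamma (alpha + 1 + INR k) / Gamma y * y / Gamma x * xa).
  assert (HL := is_RInt_gen_scal _ C _ (laplace_pow x s Hx Hs)).
  unfold is_laplace.
  match goal with |- is_RInt_gen _ _ _ ?v => replace v with (scal C (Gamma x * Rpower s (- x))) end.
  2:{ replace (n + 1 + k)%nat with (n + k + 1)%nat by lia.
      unfold scal; simpl; unfold mult; simpl. unfold C. rewrite HGa. fold x. fold y.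
      replace ((-1) ^ (n + k + 1) * (xa * ((-1) ^ (n + k + 1) * pr y (n + k + 1)) * y * Rpower s (- x)))
        with (((-1) * (-1)) ^ (n + k + 1) * (xa * pr y (n + k + 1) * y * Rpower s (- x)))
        by (rewrite Rpow_mult_distr; ring).
      replace ((-1) * (-1)) with 1 by ring. rewrite pow1. field; lra. }
  eapply is_RInt_gen_ext; [|exact HL].
  apply (Filter_prod _ _ _ (fun _ => True) (fun _ => True)); try (apply filter_true).
  intros a b _ _ t _. unfold scal; simpl; unfold mult; simpl. unfold C.
  replace (x - 1) with (INR n + alpha + 3 + INR k + mu) by (unfold x; ring).
  fold y. fold x. field; lra.
Qed.

Theorem proposition2
  (n : nat) (alpha : R) (k : nat) (mu : R)
  (Halpha : INR n < alpha <= INR n + 1) (Hmu : -1 < mu) :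
  (* (i) the x^(j)(t0) terms, 0 <= j <= n, are annihilated *)
  (forall j : nat, (j <= n)%nat -> forall s : R, 0 < s ->
     Pi_op n k mu alpha (fun u => Rpower u (- (INR j + 1))) s = 0) /\
  (* (i) the x^(2alpha-n)(t0) term is annihilated *)
  (forall s : R, 0 < s ->
     Pi_op n k mu alpha (fun u => Rpower u (- (2 * alpha - INR n + 1))) s = 0) /\
  (* (i) the inverse Laplace transform formula, for all coefficients *)
  (forall (c : nat -> R) (xa xb : R) (s : R), 0 < s ->
     is_laplace
       (fun T => Gamma (alpha + 1 + INR k) / Gamma (alpha - INR n) *
                 ((alpha - INR n) * Rpower T (INR n + alpha + 3 + INR k + mu)
                  / Gamma (INR n + alpha + INR k + mu + 4)) * xa)
       s
       ((-1) ^ (n + 1 + k) * Pi_op n k mu alpha (xhat n alpha c xa xb) s)) /\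
  (* (ii) Leibniz expansion into operators s^(-nu) d^m/ds^m, nu >= mu+1 > 0 *)
  (exists L : list (R * R * nat),
     (forall c nu m, In (c, nu, m) L -> mu + 1 <= nu /\ 0 < nu) /\
     (forall f : R -> R,
        (forall (m : nat) (u : R), 0 < u -> ex_derive_n f m u) ->
        forall s : R, 0 < s -> Pi_op n k mu alpha f s = lin_comb L f s)).
Proof.
  split; [apply part_i_a|]. split; [apply part_i_b|]. split.
  - now apply part_iii.
  - now apply part_ii.
Qed.
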